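(* Let $F$ satisfy the hypotheses of the scalar-offset setting (i.e. $F+r$ satisfies (A1) and (A3) for some $r\in\mathbb R$), and consider the linear family with basis $\psi=(F;1)$, i.e. $F_\theta=\theta_1F+\theta_2$, $\theta=(\theta_1,\theta_2)\in\Theta\subset\mathbb R^2$, assuming (A2) and (A4). Define $\theta^\circ_1=\arg\min_{\vartheta\in\mathbb R}[\Lambda_0(\vartheta F)-\vartheta\pi^1(F)]$ (assumed to exist), $\theta^\circ_2=0$, $\theta^\circ=(\theta^\circ_1,\theta^\circ_2)$, $r^\circ=\varrho_a-\Lambda_0(F_{\theta^\circ})$ and $\theta^*=\theta^\circ+r^\circ(0,1)$, and suppose $\theta^*\in\Theta$. Then $\theta^*$ minimizes $\theta\mapsto\bar J^*_\infty(\kappa;\theta)$ over $\Theta$ for every $\kappa>1$.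
   Context: Setting: $(\mathsf Y,\mathcal B)$ measurable space; $X^0,X^1$ mutually independent stationary $\mathsf Y$-valued processes with marginals $\pi^0,\pi^1$, independent of a change time $\tau_a$; $\nu(G)=\int G\,d\nu$. $\Lambda_0(G)=\lim_n\frac1n\log E[\exp(\sum_{k=0}^{n-1}G(X^0_k))]$. (A1) for a function $G$: $\pi^0(G)<0<\pi^1(G)$. (A2): for some $\varrho_a\in(0,\infty)$, $\lim_n\frac1n\log P\{\tau_a\ge n\}=-\varrho_a$. (A3) for a function $G$: with $\Upsilon_0(\vartheta)=\Lambda_0(\vartheta G)$, $G$ belongs to the class $\mathcal G$ (functions for which the cumulant generating functions for $X^0,X^1$ exist finitely and the twisted marginals, twisted processes and relative entropy rates exist); there exist $\vartheta_+>\vartheta_0>0$ with $\Upsilon_0(\vartheta_0)=0$, $\Upsilon_0(\vartheta_+)=\varrho_a$; $\Upsilon_0$ is finite and $C^1$ near $[0,\vartheta_+]$; $\vartheta G\in\mathcal G$ for $\vartheta$ near $[0,\vartheta_+]$. (A4): $\Theta$ open; each $F_\theta$ satisfies (A3); components of $\psi$ are in $\mathcal G$; $(\vartheta,\theta)\mapsto\Lambda_0(\vartheta F_\theta)$ is $C^1$ near $\{(\vartheta,\theta):\vartheta\in[0,\vartheta_+^\theta],\theta\in\Theta\}$; $v^\top\psi\equiv1$ with $v=(0,1)$. Notation: $\vartheta_+^\theta$ solves $\Lambda_0(\vartheta_+^\theta F_\theta)=\varrho_a$ as in (A3); $m_1^\theta=\pi^1(F_\theta)$ (assumed positive); $\bar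 J^*_\infty(\kappa;\theta)=\frac{\log\kappa}{m_1^\theta\vartheta_+^\theta}$. *)

(* Defs.v *)
From HB Require Import structures.
From mathcomp Require Import all_boot all_order all_algebra.
From mathcomp Require Import all_classical all_reals all_analysis.
Set Implicit Arguments. Unset Strict Implicit. Unset Printing Implicit Defensive.
Import Order.TTheory GRing.Theory Num.Theory.
Import numFieldNormedType.Exports.
Local Open Scope classical_set_scope.
Local Open Scope ring_scope.

Section Setting.
Context {R : realType} {dO dY : measure_display}
  {Omega : measurableType dO} {Y : measurableType dY} (P : probability Omega R).

Definition is_process (X : nat -> Omega -> Y) : Prop :=
  forall k, measurable_fun setT (X k).

Definition stationary (X : nat -> Omega -> Y) : Prop :=
  forall (m n : nat) (A : nat -> set Y), (forall k, measurable (A k)) ->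
    P (\bigcap_(k in `I_n) (X (k + m)%N @^-1` A k)) =
    P (\bigcap_(k in `I_n) (X k @^-1` A k)).

Definition mutually_independent (X0 X1 : nat -> Omega -> Y) (tau : Omega -> nat)
  : Prop :=
  forall (n : nat) (A B : nat -> set Y) (C : set nat),
    (forall k, measurable (A k)) -> (forall k, measurable (B k)) ->
    let E0 := \bigcap_(k in `I_n) (X0 k @^-1` A k) in
    let E1 := \bigcap_(k in `I_n) (X1 k @^-1` B k) in
    let E2 := tau @^-1` C in
    P (E0 `&` E1 `&` E2) = (P E0 * P E1 * P E2)%E.

(* nu(G) = int G d(pi), pi the (time-0) marginal of X *)
Definition marg (X : nat -> Omega -> Y) (G : Y -> R) : R :=
  fine (\int[P]_w (G (X 0%N w))%:E).

(* the n-th term (n+1 summands) of the cumulant generating sequence *)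
Definition cgf_seq (X : nat -> Omega -> Y) (G : Y -> R) (n : nat) : R :=
  (n.+1%:R)^-1 *
    ln (fine (\int[P]_w (expR (\sum_(k < n.+1) G (X k w)))%:E)).

Definition Lambda (X : nat -> Omega -> Y) (G : Y -> R) : R := limn (cgf_seq X G).

Definition cgf_exists (X : nat -> Omega -> Y) (G : Y -> R) : Prop :=
  (forall n, (\int[P]_w (expR (\sum_(k < n.+1) G (X k w)))%:E < +oo)%E) /\
  cvgn (cgf_seq X G).

Definition in_classG (X0 X1 : nat -> Omega -> Y) (G : Y -> R) : Prop :=
  measurable_fun setT G /\
  P.-integrable setT (fun w => (G (X0 0%N w))%:E) /\
  P.-integrable setT (fun w => (G (X1 0%N w))%:E) /\
  cgf_exists X0 G /\ cgf_exists X1 G.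

Definition scal (t : R) (G : Y -> R) : Y -> R := fun y => t * G y.

Definition A1 (X0 X1 : nat -> Omega -> Y) (G : Y -> R) : Prop :=
  marg X0 G < 0 < marg X1 G.

Definition A2 (tau : Omega -> nat) (rho : R) : Prop :=
  0 < rho /\
  (fun n : nat => (n.+1%:R)^-1 * ln (fine (P [set w | (n.+1 <= tau w)%N])))
    @ \oo --> - rho.

Definition A3 (X0 X1 : nat -> Omega -> Y) (rho : R) (G : Y -> R) : Prop :=
  in_classG X0 X1 G /\
  exists tp t0 : R, 0 < t0 < tp /\
    Lambda X0 (scal t0 G) = 0 /\ Lambda X0 (scal tp G) = rho /\
    exists e : R, 0 < e /\
      (forall t, - e < t < tp + e ->
         in_classG X0 X1 (scal t G) /\
         derivable (fun s => Lambda X0 (scal s G)) t 1) /\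
      {in `](- e), (tp + e)[, continuous
           (derive1 (fun s => Lambda X0 (scal s G)))}.

Definition Ftheta (F : Y -> R) (theta : R * R) : Y -> R :=
  fun y => theta.1 * F y + theta.2.

Definition vtplus (X0 : nat -> Omega -> Y) (rho : R) (F : Y -> R)
  (theta : R * R) : R :=
  xget 0 [set tp | exists t0, 0 < t0 < tp /\
     Lambda X0 (scal t0 (Ftheta F theta)) = 0 /\
     Lambda X0 (scal tp (Ftheta F theta)) = rho].

Definition m1 (X1 : nat -> Omega -> Y) (F : Y -> R) (theta : R * R) : R :=
  marg X1 (Ftheta F theta).

Definition Jbar (X0 X1 : nat -> Omega -> Y) (rho : R) (F : Y -> R)
  (kappa : R) (theta : R * R) : R :=
  ln kappa / (m1 X1 F theta * vtplus X0 rho F theta).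

End Setting.

Definition C1_near {R : realType} (f : R * (R * R) -> R) (K : set (R * (R * R)))
  : Prop :=
  exists U : set (R * (R * R)), open U /\ K `<=` U /\
    (forall z, U z -> differentiable f z) /\
    (forall v, v \in [:: (1, (0, 0)); (0, (1, 0)); (0, (0, 1))] ->
       {in U, continuous (fun z => derive f z v)}).

Definition A4 {R : realType} {dO dY : measure_display}
  {Omega : measurableType dO} {Y : measurableType dY} (P : probability Omega R)
  (X0 X1 : nat -> Omega -> Y) (rho : R) (F : Y -> R) (Theta : set (R * R))
  : Prop :=
  open Theta /\
  (forall theta, Theta theta -> A3 P X0 X1 rho (Ftheta F theta)) /\
  in_classG P X0 X1 F /\ in_classG P X0 X1 (fun _ => 1) /\
  C1_near (fun z => Lambda P X0 (scal z.1 (Ftheta F z.2)))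
    [set z | Theta z.2 /\ 0 <= z.1 <= vtplus P X0 rho F z.2].

(* Main.v *)
Require Import Defs.
From HB Require Import structures.
From mathcomp Require Import all_boot all_order all_algebra.
From mathcomp Require Import all_classical all_reals all_analysis.
From mathcomp Require Import ring lra.
From mathcomp Require Import measurable_realfun.
Import Order.TTheory GRing.Theory Num.Theory.
Import numFieldNormedType.Exports.
Set Implicit Arguments. Unset Strict Implicit. Unset Printing Implicit Defensive.
Local Open Scope classical_set_scope.
Local Open Scope ring_scope.

Lemma expR_conv {R : realType} (l x y : R) : 0 <= l -> l <= 1 ->
  expR (l * x + (1 - l) * y) <= l * expR x + (1 - l) * expR y.
Proof.
move=> l0 l1; set z := l * x + (1 - l) * y.
have hx : expR z * (1 + (x - z)) <= expR x.
  rewrite -[in leRHS](subrK z x) (expRD (x - z) z) [leRHS]mulrC ler_wpM2l ?expR_ge0 //.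
  exact: expR_ge1Dx.
have hy : expR z * (1 + (y - z)) <= expR y.
  rewrite -[in leRHS](subrK z y) (expRD (y - z) z) [leRHS]mulrC ler_wpM2l ?expR_ge0 //.
  exact: expR_ge1Dx.
have l1' : 0 <= 1 - l by rewrite subr_ge0.
apply: le_trans (lerD (ler_wpM2l l0 hx) (ler_wpM2l l1' hy)).
have -> : l * (expR z * (1 + (x - z))) + (1 - l) * (expR z * (1 + (y - z)))
  = expR z * (1 + (l * x + (1 - l) * y - z)) by ring.
by rewrite /z subrr addr0 mulr1.
Qed.

Lemma le_expRln {R : realType} (x : R) : 0 <= x -> x <= expR (ln x).
Proof.
rewrite le_eqVlt => /orP [/eqP <-|x0]; first exact: expR_ge0.
by rewrite lnK.
Qed.

Lemma lim_ne0_cvg {R : realType} (u : nat -> R) : limn u != 0 -> cvgn u.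
Proof.
move=> h; have [//|nc] := pselect (cvgn u).
exfalso; move/eqP: h; apply.
rewrite /lim /lim_in xgetPN // => x hx; apply: nc; apply/cvg_ex; by exists x.
Qed.

Section Helpers.
Context {R : realType} {dO dY : measure_display}
  {Omega : measurableType dO} {Y : measurableType dY} (P : probability Omega R).

Definition Iexp (X : nat -> Omega -> Y) (G : Y -> R) (n : nat) : \bar R :=
  \int[P]_w (expR (\sum_(k < n.+1) G (X k w)))%:E.

Lemma meas_sum (X : nat -> Omega -> Y) (G : Y -> R) n :
  is_process X -> measurable_fun setT G ->
  measurable_fun setT (fun w => \sum_(k < n.+1) G (X k w)).
Proof.
move=> hX hG; apply: measurable_sum => k.
exact: measurableT_comp hG (hX k).
Qed.

Lemma meas_expsum (X : nat -> Omega -> Y) (G : Y -> R) n :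
  is_process X -> measurable_fun setT G ->
  measurable_fun setT (EFin \o (fun w => expR (\sum_(k < n.+1) G (X k w)))).
Proof.
move=> hX hG; apply/measurable_EFinP.
exact: measurableT_comp (@measurable_expR R) (meas_sum n hX hG).
Qed.

Lemma int_expR_gt0 (f : Omega -> R) : measurable_fun setT f ->
  (0 < \int[P]_w (expR (f w))%:E)%E.
Proof.
move=> hf.
rewrite lt_neqAle integral_ge0 ?andbT; last by move=> w _; rewrite lee_fin expR_ge0.
apply/negP => /eqP h0.
pose A (m : nat) := [set w | - (m%:R : R) < f w].
have mA m : measurable (A m).
  have := hf measurableT _ (measurable_itv `]-(m%:R : R), +oo[).
  rewrite setTI; congr measurable; apply/seteqP; split=> w /=;
    by rewrite /A /= in_itv /= andbT.
have hA m : P (A m) = 0%E.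
  apply/eqP; rewrite eq_le measure_ge0 andbT.
  have : ((expR (- (m%:R : R)))%:E * P (A m) <= \int[P]_w (expR (f w))%:E)%E.
    rewrite -integral_cst //.
    have mef : measurable_fun setT (EFin \o (fun w => expR (f w))).
      by apply/measurable_EFinP; exact: measurableT_comp (@measurable_expR R) hf.
    apply: le_trans (ge0_subset_integral P (mA m) measurableT mef _ (@subsetT _ (A m))); last first.
      by move=> w _; rewrite lee_fin expR_ge0.
    apply: ge0_le_integral => //.
    - by move=> w _; rewrite lee_fin expR_ge0.
    - exact: measurable_funS mef.
    - by move=> w Aw; rewrite lee_fin ler_expR; apply: ltW.
  by rewrite -h0 pmule_rle0 // lte_fin expR_gt0.
have hT : P setT = 0%E.
  have : P.-negligible (\bigcup_m A m).
    apply: negligible_bigcup => m.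
    by rewrite negligibleP; [exact: hA| exact: mA].
  rewrite (_ : \bigcup_m A m = setT).
    by rewrite negligibleP.
  apply/seteqP; split=> // w _.
  exists (Num.Def.archi_bound `|f w|) => //.
  have := archi_boundP (normr_ge0 (f w)).
  by rewrite ltr_norml => /andP[].
by move: hT; rewrite probability_setT => /eqP; rewrite onee_eq0.
Qed.

Lemma Iexp_gt0 X G n : is_process X -> measurable_fun setT G ->
  (0 < Iexp X G n)%E.
Proof. by move=> hX hG; apply: int_expR_gt0; exact: (meas_sum n hX hG). Qed.

Lemma Iexp_ge0 X G n : (0 <= Iexp X G n)%E.
Proof. by apply: integral_ge0 => w _; rewrite lee_fin expR_ge0. Qed.

Lemma cgfE (X : nat -> Omega -> Y) (G : Y -> R) n : cgf_seq P X G n = (n.+1%:R)^-1 * ln (fine (Iexp X G n)).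
Proof. by []. Qed.

Lemma Iexp_shift (X : nat -> Omega -> Y) (G : Y -> R) (c : R) n : is_process X -> measurable_fun setT G ->
  Iexp X (fun y => G y + c) n = ((expR (n.+1%:R * c))%:E * Iexp X G n)%E.
Proof.
move=> hX hG; rewrite /Iexp -ge0_integralZl_EFin //.
- apply: eq_integral => w _; rewrite -EFinM big_split /= sumr_const card_ord.
  by rewrite mulr_natl addrC expRD.
- exact: (meas_expsum n hX hG).
Qed.

Lemma cgf_finite (X : nat -> Omega -> Y) (G : Y -> R) n : cgf_seq P X G n != 0 -> (Iexp X G n < +oo)%E.
Proof.
move=> h; rewrite ltNge leye_eq; apply/negP => /eqP hI; move: h.
by rewrite cgfE hI /= ln0 // mulr0 eqxx.
Qed.

Lemma Iexp_fin (X : nat -> Omega -> Y) (G : Y -> R) n : (Iexp X G n < +oo)%E -> Iexp X G n \is a fin_num.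
Proof. by move=> h; rewrite ge0_fin_numE // Iexp_ge0. Qed.

Lemma cgf_shift (X : nat -> Omega -> Y) (G : Y -> R) (c : R) n : is_process X -> measurable_fun setT G ->
  (Iexp X G n < +oo)%E ->
  cgf_seq P X (fun y => G y + c) n = cgf_seq P X G n + c.
Proof.
move=> hX hG hfin; rewrite !cgfE Iexp_shift // fineM //; last exact: Iexp_fin.
rewrite lnM ?posrE ?expR_gt0 //; last first.
  by apply: fine_gt0; rewrite Iexp_gt0 // hfin.
by rewrite expRK mulrDr mulrA mulVf ?mul1r ?pnatr_eq0 // addrC.
Qed.

Lemma meas_cexpsum (X : nat -> Omega -> Y) (G : Y -> R) (c : R) n :
  is_process X -> measurable_fun setT G ->
  measurable_fun setT (fun w => (c%:E * (expR (\sum_(k < n.+1) G (X k w)))%:E)%E).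
Proof.
move=> hX hG.
rewrite (_ : (fun w => _) = EFin \o (fun w => c * expR (\sum_(k < n.+1) G (X k w)))); last first.
  by apply/funext => w /=; rewrite EFinM.
apply/measurable_EFinP; apply: measurable_funM; first exact: measurable_cst.
exact: measurableT_comp (@measurable_expR R) (meas_sum n hX hG).
Qed.

Lemma conv_contra (X : nat -> Omega -> Y) (G : Y -> R) (p q r a b g : R) :
  is_process X -> measurable_fun setT G ->
  p < q -> q < r -> 0 < b ->
  cgf_seq P X (scal p G) @ \oo --> a ->
  cgf_seq P X (scal q G) @ \oo --> b ->
  cgf_seq P X (scal r G) @ \oo --> g ->
  (\forall n \near \oo, (Iexp X (scal p G) n < +oo)%E) ->
  (\forall n \near \oo, (Iexp X (scal r G) n < +oo)%E) ->
  a * (r - q) + g * (q - p) < b * (r - p) -> False.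
Proof.
move=> hX hG pq qr b0 ca cb cg fp fr ineq.
have rp : 0 < r - p by rewrite subr_gt0 (lt_trans pq qr).
have rp' : r - p != 0 by rewrite gt_eqF.
set l := (r - q) / (r - p).
have l0' : 0 < l by rewrite divr_gt0 // subr_gt0.
have l0 : 0 <= l by apply: ltW.
have l1E : 1 - l = (q - p) / (r - p) by rewrite /l; field.
have l1 : 0 < 1 - l by rewrite l1E divr_gt0 // subr_gt0.
have l1' : l <= 1 by rewrite -subr_ge0 ltW.
set M := l * a + (1 - l) * g.
have hM : M < b.
  have -> : M = (a * (r - q) + g * (q - p)) / (r - p) by rewrite /M l1E /l; field.
  by rewrite ltr_pdivrMr.
set e := (b - M) / 2.
have e0 : 0 < e by rewrite divr_gt0 // subr_gt0.
have hq : l * p + (1 - l) * r = q by rewrite /l; field.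
have E1 : \forall n \near \oo, cgf_seq P X (scal p G) n < a + e.
  by apply: (cvgr_lt a ca); rewrite ltrDl.
have E2 : \forall n \near \oo, M + e < cgf_seq P X (scal q G) n.
  by apply: (cvgr_gt b cb); rewrite /e; lra.
have E3 : \forall n \near \oo, 0 < cgf_seq P X (scal q G) n.
  exact: (cvgr_gt b cb).
have E4 : \forall n \near \oo, cgf_seq P X (scal r G) n < g + e.
  by apply: (cvgr_lt g cg); rewrite ltrDl.
have : \forall n \near \oo, (Iexp X (scal p G) n < +oo)%E /\
    (Iexp X (scal r G) n < +oo)%E /\ cgf_seq P X (scal p G) n < a + e /\
    M + e < cgf_seq P X (scal q G) n /\ 0 < cgf_seq P X (scal q G) n /\
    cgf_seq P X (scal r G) n < g + e.
  near=> n; do 5 (split; first by near: n).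
  by near: n.
move=> /filter_ex [n [hfp [hfr [hu [hv [hv0 hw]]]]]].
set m : R := n.+1%:R.
have m0 : 0 < m by rewrite /m ltr0Sn.
have sumE t w : \sum_(k < n.+1) scal t G (X k w) = t * \sum_(k < n.+1) G (X k w).
  by rewrite mulr_sumr.
set k1 := M - a.
set k2 := M - g.
set c1 := l * expR (m * k1).
set c2 := (1 - l) * expR (m * k2).
have c10 : 0 <= c1 by rewrite /c1 mulr_ge0 // expR_ge0.
have c20 : 0 <= c2 by rewrite /c2 mulr_ge0 ?expR_ge0 // ltW.
have pw w : expR (\sum_(k < n.+1) scal q G (X k w)) <=
    c1 * expR (\sum_(k < n.+1) scal p G (X k w)) +
    c2 * expR (\sum_(k < n.+1) scal r G (X k w)).
  rewrite !sumE; move: (\sum_(k < n.+1) G (X k w)) => S.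
  have := expR_conv (p * S + m * k1) (r * S + m * k2) l0 l1'.
  have -> : l * (p * S + m * k1) + (1 - l) * (r * S + m * k2) = q * S.
    by rewrite -hq /k1 /k2 /M; ring.
  move=> h; apply: le_trans h _.
  rewrite (expRD (p * S)) (expRD (r * S)) /c1 /c2 le_eqVlt; apply/orP; left.
  by apply/eqP; ring.
have mscal t : measurable_fun setT (scal t G).
  exact: (measurable_funM (measurable_cst t) hG).
have hI : (Iexp X (scal q G) n <=
    c1%:E * Iexp X (scal p G) n + c2%:E * Iexp X (scal r G) n)%E.
  have mp := meas_expsum n hX (mscal p).
  have mr := meas_expsum n hX (mscal r).
  have mcp := meas_cexpsum c1 n hX (mscal p).
  have mcr := meas_cexpsum c2 n hX (mscal r).
  rewrite /Iexp -ge0_integralZl_EFin //.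
  rewrite -ge0_integralZl_EFin //.
  rewrite -ge0_integralD //; try solve [exact: mcp| exact: mcr |
    by move=> w _; rewrite mule_ge0 // lee_fin expR_ge0].
  apply: ge0_le_integral => //.
  - exact: (meas_expsum n hX (mscal q)).
  - apply: emeasurable_funD.
      exact: mcp.
    exact: mcr.
  - by move=> w _; rewrite -!EFinM -EFinD lee_fin; exact: pw.
have Fp := Iexp_fin hfp.
have Fr := Iexp_fin hfr.
have hfq : (Iexp X (scal q G) n < +oo)%E.
  apply: le_lt_trans hI _.
  by rewrite -(fineK Fp) -(fineK Fr) -!EFinM -EFinD ltry.
have Fq := Iexp_fin hfq.
move: hI; rewrite -(fineK Fq) -(fineK Fp) -(fineK Fr) -!EFinM -EFinD lee_fin => hI.
have hp : fine (Iexp X (scal p G) n) <= expR (m * (a + e)).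
  apply: le_trans (le_expRln (fine_ge0 (Iexp_ge0 _ _ _))) _.
  rewrite ler_expR; apply: ltW; move: hu.
  by rewrite cgfE -(ltr_pM2l m0) mulrA mulfV ?mul1r // gt_eqF.
have hr : fine (Iexp X (scal r G) n) <= expR (m * (g + e)).
  apply: le_trans (le_expRln (fine_ge0 (Iexp_ge0 _ _ _))) _.
  rewrite ler_expR; apply: ltW; move: hw.
  by rewrite cgfE -(ltr_pM2l m0) mulrA mulfV ?mul1r // gt_eqF.
have q0 : 0 < fine (Iexp X (scal q G) n).
  rewrite ltNge; apply/negP => h; move: hv0.
  by rewrite cgfE ln0 // mulr0 ltxx.
have hqq : expR (m * (M + e)) < fine (Iexp X (scal q G) n).
  rewrite -[ltRHS](lnK q0) ltr_expR; move: hv.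
  by rewrite cgfE -(ltr_pM2l m0) mulrA mulfV ?mul1r // gt_eqF.
have := le_trans hI (lerD (ler_wpM2l c10 hp) (ler_wpM2l c20 hr)).
have -> : c1 * expR (m * (a + e)) + c2 * expR (m * (g + e)) = expR (m * (M + e)).
  rewrite /c1 /c2 -(mulrA l) -(mulrA (1 - l)) -!expRD.
  have -> : m * k1 + m * (a + e) = m * (M + e) by rewrite /k1; ring.
  have -> : m * k2 + m * (g + e) = m * (M + e) by rewrite /k2; ring.
  by rewrite -mulrDl addrC subrK mul1r.
by move=> h; move: (lt_le_trans hqq h); rewrite ltxx.
Unshelve. all: end_near.
Qed.

Lemma reg_facts (X0 X1 : nat -> Omega -> Y) (G : Y -> R) t :
  in_classG P X0 X1 (scal t G) ->
  cgf_seq P X0 (scal t G) @ \oo --> Lambda P X0 (scal t G) /\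
  forall n, (Iexp X0 (scal t G) n < +oo)%E.
Proof. by move=> [_ [_ [_ [[hf hc] _]]]]; split. Qed.

Lemma cvg_fin_near (X : nat -> Omega -> Y) (G : Y -> R) (L : R) :
  0 < L -> cgf_seq P X G @ \oo --> L ->
  \forall n \near \oo, (Iexp X G n < +oo)%E.
Proof.
move=> L0 hc.
have h : \forall n \near \oo, 0 < cgf_seq P X G n by exact: (cvgr_gt L hc 0 L0).
by near=> n; apply: cgf_finite; rewrite gt_eqF //; near: n.
Unshelve. all: end_near.
Qed.

Lemma Lambda_cvg (X : nat -> Omega -> Y) (G : Y -> R) (L : R) :
  L != 0 -> Lambda P X G = L -> cgf_seq P X G @ \oo --> L.
Proof.
move=> L0 hL; have hc : cvgn (cgf_seq P X G) by apply: lim_ne0_cvg; rewrite -/(Lambda P X G) hL.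
by move: hc; rewrite -/(Lambda P X G) hL.
Qed.

Lemma A3_vt (X0 X1 : nat -> Omega -> Y) (rho : R) (F : Y -> R) (th : R * R) :
  0 < rho -> is_process X0 -> A3 P X0 X1 rho (Ftheta F th) ->
  exists tp t0 e, [/\ 0 < t0 < tp, 0 < e,
    Lambda P X0 (scal t0 (Ftheta F th)) = 0,
    Lambda P X0 (scal tp (Ftheta F th)) = rho &
    ((forall t, - e < t < tp + e -> in_classG P X0 X1 (scal t (Ftheta F th))) /\
    vtplus P X0 rho F th = tp)].
Proof.
move=> r0 hX [hG [tp [t0 [/andP[t00 t0tp] [L0 [Lp [e [e0 [hreg _]]]]]]]]].
set G := Ftheta F th in hG L0 Lp hreg *.
have mG : measurable_fun setT G by case: hG.
have reg t : - e < t < tp + e ->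
    cgf_seq P X0 (scal t G) @ \oo --> Lambda P X0 (scal t G) /\
    forall n, (Iexp X0 (scal t G) n < +oo)%E.
  by move=> ht; apply: (@reg_facts X0 X1); case: (hreg t ht).
have e0' : - e < 0 by rewrite oppr_lt0.
exists tp, t0, e; split; [by rewrite t00 | exact: e0 | exact: L0 | exact: Lp |].
split; first by move=> t ht; case: (hreg t ht).
apply: xget_unique; first by exists t0; split; [rewrite t00 | split; [exact: L0 | exact: Lp]].
move=> y [t0y [/andP[t0y0 t0yy] [Ly0 Lyr]]].
have [ylt|ygt|//] := ltgtP y tp.
- exfalso.
  have r1 : - e < t0y < tp + e.
    apply/andP; split; first exact: lt_trans e0' t0y0.
    by rewrite (lt_trans t0yy) // (lt_trans ylt) // ltrDl.
  have r2 : - e < y < tp + e.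
    apply/andP; split; first by apply: lt_trans e0' (lt_trans t0y0 t0yy).
    by rewrite (lt_trans ylt) // ltrDl.
  have r3 : - e < tp < tp + e.
    apply/andP; split; first by apply: lt_trans e0' (lt_trans t00 t0tp).
    by rewrite ltrDl.
  have := (reg _ r1).1; rewrite Ly0 => c1.
  have := (reg _ r2).1; rewrite Lyr => c2.
  have := (reg _ r3).1; rewrite Lp => c3.
  apply: (@conv_contra X0 G t0y y tp 0 rho rho hX mG t0yy ylt r0 c1 c2 c3).
  - by apply: nearW => n; exact: (reg _ r1).2.
  - by apply: nearW => n; exact: (reg _ r3).2.
  - by rewrite mul0r add0r ltr_pM2l // ltrD2r.
- exfalso.
  have r1 : - e < t0 < tp + e.
    apply/andP; split; first exact: lt_trans e0' t00.
    by rewrite (lt_trans t0tp) // ltrDl.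
  have r3 : - e < tp < tp + e.
    apply/andP; split; first by apply: lt_trans e0' (lt_trans t00 t0tp).
    by rewrite ltrDl.
  have := (reg _ r1).1; rewrite L0 => c1.
  have := (reg _ r3).1; rewrite Lp => c2.
  have c3 := Lambda_cvg (negbT (gt_eqF r0)) Lyr.
  apply: (@conv_contra X0 G t0 tp y 0 rho rho hX mG t0tp ygt r0 c1 c2 c3).
  - by apply: nearW => n; exact: (reg _ r1).2.
  - exact: cvg_fin_near r0 c3.
  - by rewrite mul0r add0r ltr_pM2l // ltrD2r.
Qed.

Lemma margE (X1 : nat -> Omega -> Y) (F : Y -> R) (a c : R) :
  P.-integrable setT (fun w => (F (X1 0%N w))%:E) ->
  marg P X1 (fun y => a * F y + c) = a * marg P X1 F + c.
Proof.
move=> hi; rewrite /marg.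
change (Rintegral P setT (fun w => a * F (X1 0%N w) + c) =
  a * Rintegral P setT (fun w => F (X1 0%N w)) + c).
have hiZ : P.-integrable setT (EFin \o (fun w => a * F (X1 0%N w))).
  rewrite (_ : EFin \o _ = (fun w => (a%:E * (F (X1 0%N w))%:E)%E)).
    by apply: integrableZl.
  by apply/funext => w /=; rewrite EFinM.
rewrite RintegralD; [|exact: measurableT|exact: hiZ|].
  rewrite RintegralZl; [|exact: measurableT|exact: hi].
  rewrite Rintegral_cst; last exact: measurableT.
  have h1 : fine (P [set: Omega]) = 1 by rewrite probability_setT.
  by rewrite h1 mulr1.
exact: (finite_measure_integrable_cst P c measurableT).
Qed.

Lemma Iexp_scal0 (X : nat -> Omega -> Y) (G : Y -> R) n :
  Iexp X (scal 0 G) n = 1%E.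
Proof.
rewrite /Iexp (eq_integral (fun _ => 1%E)).
  by rewrite (integral_cst P measurableT 1%E) mul1e; apply: probability_setT.
by move=> w _; rewrite big1 ?expR0 // => k _; rewrite /scal mul0r.
Qed.

Lemma cgf_scal0 (X : nat -> Omega -> Y) (G : Y -> R) n :
  cgf_seq P X (scal 0 G) n = 0.
Proof. by rewrite cgfE Iexp_scal0 /= ln1 mulr0. Qed.

Lemma inreg (e tp t : R) : 0 < e -> 0 < t -> t <= tp -> - e < t < tp + e.
Proof.
move=> e0 t0 ttp; apply/andP; split.
  by apply: lt_trans t0; rewrite oppr_lt0.
by apply: le_lt_trans ttp _; rewrite ltrDl.
Qed.

End Helpers.


Unset Implicit Arguments.

Theorem propositiont (R : realType) (dO dY : measure_display)
  (Omega : measurableType dO) (Y : measurableType dY) (P : probability Omega R)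
  (X0 X1 : nat -> Omega -> Y) (tau : Omega -> nat) (rho : R)
  (F : Y -> R) (Theta : set (R * R)) (theta1o : R) :
  is_process X0 -> is_process X1 ->
  stationary P X0 -> stationary P X1 ->
  (forall n, measurable [set w | (n <= tau w)%N]) ->
  mutually_independent P X0 X1 tau ->
  (* scalar-offset setting *)
  (exists r : R, A1 P X0 X1 (fun y => F y + r) /\
                 A3 P X0 X1 rho (fun y => F y + r)) ->
  A2 P tau rho ->
  A4 P X0 X1 rho F Theta ->
  (* m_1^theta > 0 on Theta *)
  (forall theta, Theta theta -> 0 < m1 P X1 F theta) ->
  (* theta1o = argmin_vartheta [Lambda0(vartheta F) - vartheta pi^1(F)] *)
  cgf_exists P X0 (scal theta1o F) ->
  (forall t : R, cgf_exists P X0 (scal t F) ->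
     Lambda P X0 (scal theta1o F) - theta1o * marg P X1 F
       <= Lambda P X0 (scal t F) - t * marg P X1 F) ->
  let thetao := (theta1o, 0) in
  let ro := rho - Lambda P X0 (Ftheta F thetao) in
  let thetastar := (thetao.1 + ro * 0, thetao.2 + ro * 1) in
  Theta thetastar ->
  forall kappa : R, 1 < kappa ->
  forall theta, Theta theta ->
    Jbar P X0 X1 rho F kappa thetastar <= Jbar P X0 X1 rho F kappa theta.
Proof.
move=> hX0 hX1 _ _ _ _ _ [r0 _] [_ [hA3 [cF _]]] hm1 cgfo hmin thetao ro thetastar
  hstar kappa hk theta hth.
have [mF [_ [iF1 _]]] := cF.
set pi := marg P X1 F.
set L1 := Lambda P X0 (scal theta1o F).
have roE : ro = rho - L1.
  rewrite /ro /L1; congr (_ - Lambda P X0 _); apply/funext => y.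
  by rewrite /Ftheta /scal /thetao /= addr0.
set K := rho - L1 + theta1o * pi.
have m1E th : m1 P X1 F th = th.1 * pi + th.2 by rewrite /m1 /Ftheta margE.
have mscal t : measurable_fun setT (scal t F).
  exact: (measurable_funM (measurable_cst t) mF).
have bound th : Theta th -> m1 P X1 F th * vtplus P X0 rho F th <= K.
  move=> hth'.
  have [tp [t0 [e [/andP[t00 t0tp] e0 L0 Lp [reg vt]]]]] :=
    A3_vt r0 hX0 (hA3 th hth').
  rewrite vt.
  have [hcvg hfin] := reg_facts (reg tp (inreg e0 (lt_trans t00 t0tp) (lexx tp))).
  rewrite Lp in hcvg.
  set s := tp * th.1; set c := tp * th.2.
  have EH : scal tp (Ftheta F th) = (fun y => scal s F y + c).
    by apply/funext => y; rewrite /scal /Ftheta /s /c; ring.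
  rewrite EH in hfin hcvg.
  have finH n : (Iexp P X0 (scal s F) n < +oo)%E.
    have := hfin n; rewrite Iexp_shift; [|exact: hX0|exact: mscal].
    move: (Iexp_ge0 P X0 (scal s F) n).
    case: (Iexp P X0 (scal s F) n) => [x _ _|_ h|]; first exact: ltry.
      by move: h; rewrite muleC gt0_mulye ?lte_fin ?expR_gt0.
    by rewrite leeNy_eq.
  have eqf : cgf_seq P X0 (scal s F) =
      (fun n => cgf_seq P X0 (fun y => scal s F y + c) n - c).
    by apply/funext => n; rewrite cgf_shift; [rewrite addrK|exact: hX0|exact: mscal|exact: finH].
  have cH : cgf_seq P X0 (scal s F) @ \oo --> rho - c.
    rewrite eqf; exact: (cvgB hcvg (cvg_cst c)).
  have cgfH : cgf_exists P X0 (scal s F).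
    split; first exact: finH.
    by apply/cvg_ex; exists (rho - c).
  have LH : Lambda P X0 (scal s F) = rho - c by apply: cvg_lim.
  have := hmin s cgfH; rewrite -/L1 -/pi LH m1E /K => h.
  have -> : (th.1 * pi + th.2) * tp = s * pi + c by rewrite /s /c; ring.
  rewrite -subr_ge0 (_ : _ - _ = (rho - c - s * pi) - (L1 - theta1o * pi)).
    by rewrite subr_ge0.
  by ring.
have hstarA3 := hA3 thetastar hstar.
have [tp [t0 [e [/andP[t00 t0tp] e0 L0 Lp [reg vt]]]]] := A3_vt r0 hX0 hstarA3.
have E1 : scal 1 (Ftheta F thetastar) = (fun y => scal theta1o F y + ro).
  by apply/funext => y; rewrite /scal /Ftheta /thetastar /thetao /=; ring.
have [cfo ccvg] := cgfo.
have fin1 n : (Iexp P X0 (scal 1 (Ftheta F thetastar)) n < +oo)%E.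
  rewrite E1 Iexp_shift; [|exact: hX0|exact: mscal].
  by rewrite -(fineK (Iexp_fin (cfo n))) -EFinM ltry.
have c1 : cgf_seq P X0 (scal 1 (Ftheta F thetastar)) @ \oo --> rho.
  rewrite E1 (_ : cgf_seq _ _ _ = fun n => cgf_seq P X0 (scal theta1o F) n + ro);
    last by apply/funext => n; rewrite cgf_shift; [|exact: hX0|exact: mscal|exact: cfo].
  rewrite (_ : rho = L1 + ro); last by rewrite roE addrC subrK.
  exact: (cvgD ccvg (cvg_cst ro)).
have c0 : cgf_seq P X0 (scal 0 (Ftheta F thetastar)) @ \oo --> 0.
  rewrite (_ : cgf_seq _ _ _ = fun=> 0); first exact: cvg_cst.
  by apply/funext => n; exact: cgf_scal0.
have fin0 n : (Iexp P X0 (scal 0 (Ftheta F thetastar)) n < +oo)%E.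
  by rewrite Iexp_scal0 ltry.
have mGs : measurable_fun setT (Ftheta F thetastar) by case: hstarA3 => -[].
have rt0 := inreg e0 t00 (ltW t0tp).
have rtp := inreg e0 (lt_trans t00 t0tp) (lexx tp).
have [c0' f0] := reg_facts (reg t0 rt0); rewrite L0 in c0'.
have [cp fp] := reg_facts (reg tp rtp); rewrite Lp in cp.
have vt1 : tp = 1.
  have [lt1|gt1|//] := ltgtP tp 1; exfalso.
  - have ineq : 0 * (1 - tp) + rho * (tp - t0) < rho * (1 - t0).
      by rewrite mul0r add0r (ltr_pM2l r0) ltrD2r.
    exact: (conv_contra hX0 mGs t0tp lt1 r0 c0' cp c1 (nearW _ f0) (nearW _ fin1) ineq).
  - have [t1|t1|t1] := ltgtP t0 1.
    + have ineq : 0 * (tp - 1) + rho * (1 - t0) < rho * (tp - t0).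
        by rewrite mul0r add0r (ltr_pM2l r0) ltrD2r.
      exact: (conv_contra hX0 mGs t1 gt1 r0 c0' c1 cp (nearW _ f0) (nearW _ fp) ineq).
    + have ineq : 0 * (t0 - 1) + 0 * (1 - 0) < rho * (t0 - 0).
        by rewrite !mul0r addr0 subr0 (mulr_gt0 r0 (lt_trans ltr01 t1)).
      exact: (conv_contra hX0 mGs ltr01 t1 r0 c0 c1 c0' (nearW _ fin0) (nearW _ f0) ineq).
    + move: c0'; rewrite t1 => c0''.
      have h1 : limn (cgf_seq P X0 (scal 1 (Ftheta F thetastar))) = 0.
        exact: (cvg_lim (@Rhausdorff R) c0'').
      have h2 : limn (cgf_seq P X0 (scal 1 (Ftheta F thetastar))) = rho.
        exact: (cvg_lim (@Rhausdorff R) c1).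
      have h3 : rho = 0 by rewrite -h2 h1.
      by move: r0; rewrite h3 ltxx.
have mstar : m1 P X1 F thetastar = K.
  by rewrite m1E /thetastar /thetao /= roE /K; ring.
have hb := bound theta hth.
have A0 : 0 < m1 P X1 F theta * vtplus P X0 rho F theta.
  have [tp' [t0' [e' [/andP[t0'0 t0'tp] _ _ _ [_ vt']]]]] :=
    A3_vt r0 hX0 (hA3 theta hth).
  rewrite vt'; apply: mulr_gt0; [exact: hm1 | exact: lt_trans t0'0 t0'tp].
have K0 : 0 < K by apply: lt_le_trans A0 hb.
rewrite /Jbar vt vt1 mulr1 mstar.
have lk : 0 <= ln kappa by apply: ltW; apply: ln_gt0.
apply: ler_wpM2l; first exact: lk.
rewrite lef_pV2; [exact: hb | by rewrite posrE | by rewrite posrE].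
Qed.
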